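(* (i) For every nondeterministic finite automaton with $n$ states there is an IFA with at most $2^n$ states accepting the same language. (ii) For every $n \ge 3$ there exists a nondeterministic finite automaton with $n$ states such that every IFA accepting the same language has at least $2^n - 1$ states. In particular, the worst-case state blowup for converting NFAs to IFAs is $\Theta(2^n)$.
   Context: A $\mathbb{Q}$-weighted automaton $\mathcal{A} = (Q, \Sigma, M, \alpha, \eta)$ consists of a finite state set $Q$, finite alphabet $\Sigma$, $M : \Sigma \to \mathbb{Q}^{Q\times Q}$, initial row vector $\alpha \in \mathbb{Q}^Q$, final column vector $\eta \in \mathbb{Q}^Q$; with $M(a_1\cdots a_k) = M(a_1)\cdots M(a_k)$, it assigns $L_\mathcal{A}(w) = \alpha M(w)\eta$ to each $w \in \Sigma^*$. It is an IFA if $L_\mathcal{A}(w) \in \{0,1\}$ for all $w$, and then its language is $L(\mathcal{A}) = \{w \mid L_\mathcal{A}(w) = 1\}$. The number of states of $\mathcal{A}$ is $|Q|$. *)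

(* Defs.v *)
From HB Require Import structures.
From mathcomp Require Import all_boot all_order all_algebra.
Set Implicit Arguments. Unset Strict Implicit. Unset Printing Implicit Defensive.
Import Order.TTheory GRing.Theory Num.Theory.
Local Open Scope ring_scope.

Record nfa (Sigma : finType) (n : nat) := NFA {
  ntrans : Sigma -> 'I_n -> 'I_n -> bool;   (* ntrans a p q : p --a--> q *)
  ninit  : {set 'I_n};
  nfinal : {set 'I_n} }.

Definition nfa_step (Sigma : finType) (n : nat) (A : nfa Sigma n)
  (S : {set 'I_n}) (a : Sigma) : {set 'I_n} :=
  [set q | [exists p in S, ntrans A a p q]].

Definition nfa_reach (Sigma : finType) (n : nat) (A : nfa Sigma n)
  (S : {set 'I_n}) (w : seq Sigma) : {set 'I_n} :=
  foldl (nfa_step A) S w.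

Definition nfa_accepts (Sigma : finType) (n : nat) (A : nfa Sigma n)
  (w : seq Sigma) : bool :=
  (nfa_reach A (ninit A) w :&: nfinal A) != set0.

Record wfa (Sigma : finType) (n : nat) := WFA {
  wM     : Sigma -> 'M[rat]_n;
  walpha : 'rV[rat]_n;
  weta   : 'cV[rat]_n }.

Definition wmat (Sigma : finType) (n : nat) (A : wfa Sigma n)
  (w : seq Sigma) : 'M[rat]_n :=
  foldr (fun a B => wM A a *m B) 1%:M w.

Definition wfa_weight (Sigma : finType) (n : nat) (A : wfa Sigma n)
  (w : seq Sigma) : rat :=
  (walpha A *m wmat A w *m weta A) 0 0.

Definition is_IFA (Sigma : finType) (n : nat) (A : wfa Sigma n) : Prop :=
  forall w, wfa_weight A w = 0 \/ wfa_weight A w = 1.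

Definition ifa_accepts (Sigma : finType) (n : nat) (A : wfa Sigma n)
  (w : seq Sigma) : bool :=
  wfa_weight A w == 1.

(* Main.v *)
Require Import Defs.
From mathcomp Require Import all_boot all_order all_algebra.
Set Implicit Arguments. Unset Strict Implicit. Unset Printing Implicit Defensive.
Import Order.TTheory GRing.Theory Num.Theory.
Local Open Scope ring_scope.

Lemma card_sets n : #|{set 'I_n}| = (2 ^ n)%N.
Proof. by rewrite -cardsT -powersetT card_powerset cardsT card_ord. Qed.

Lemma wmat_cons (Sigma : finType) m (A : wfa Sigma m) a w :
  wmat A (a :: w) = wM A a *m wmat A w.
Proof. by []. Qed.

Section Det.
Variables (Sigma : finType) (n : nat) (N : nfa Sigma n).
Local Notation ST := {set 'I_n}.
Local Notation k := #|ST|.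

Definition detM (a : Sigma) : 'M[rat]_k :=
  \matrix_(i, j) (nfa_step N (enum_val i) a == enum_val j)%:R.
Definition detA : wfa Sigma k :=
  WFA detM (delta_mx 0 (enum_rank (ninit N)))
    (\col_j ((enum_val j :&: nfinal N) != set0)%:R).

Lemma det_run w (S : ST) :
  (delta_mx 0 (enum_rank S) : 'rV[rat]_k) *m wmat detA w = delta_mx 0 (enum_rank (nfa_reach N S w)).
Proof.
elim: w S => [|a w IH] S; first by rewrite /= mulmx1.
rewrite wmat_cons mulmxA -rowE.
have -> : row (enum_rank S) (wM detA a) = delta_mx 0 (enum_rank (nfa_step N S a)).
  apply/matrixP => i j; rewrite !mxE enum_rankK ord1 eqxx /=.
  by rewrite -(can_eq enum_valK) enum_rankK eq_sym.
by rewrite IH.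
Qed.

Lemma det_weight w :
  wfa_weight detA w = (nfa_accepts N w)%:R.
Proof.
rewrite /wfa_weight det_run -rowE !mxE enum_rankK.
by [].
Qed.
End Det.

Section Lower.
Variable n : nat.
Local Notation ST := {set 'I_n}.
Local Notation k := #|ST|.

Definition Xm : 'M[rat]_k := \matrix_(i, j) (enum_val i :&: enum_val j != set0)%:R.
Definition Dm : 'M[rat]_k := \matrix_(i, j) (enum_val i :&: enum_val j == set0)%:R.

Lemma Dm_ker (v : 'rV[rat]_k) : v *m Dm = 0 -> v = 0.
Proof.
move=> Hv.
suff H : forall c (i : 'I_k), (#|enum_val i| < c)%N -> v 0 i = 0.
  by apply/matrixP => i j; rewrite ord1 mxE; apply: (H #|enum_val j|.+1).
elim=> [//|c IH] i Hi.
have := congr1 (fun M : 'M[rat]_(1, k) => M 0 (enum_rank (~: enum_val i) : 'I_k)) Hv.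
rewrite !mxE (bigD1 i) //= big1 ?addr0.
  by rewrite !mxE enum_rankK setICr eqxx mulr1.
move=> j Hj; rewrite !mxE enum_rankK setI_eq0 disjoints_subset setCK.
case Hs: (enum_val j \subset enum_val i); last by rewrite mulr0.
rewrite IH ?mul0r //.
have Hp : enum_val j \proper enum_val i.
  by rewrite properEneq Hs andbT (inj_eq enum_val_inj).
by move/proper_card: Hp => Hp; apply: leq_trans Hp _.
Qed.

Lemma Dm_rank : \rank Dm = k.
Proof.
have : row_free Dm.
  rewrite -kermx_eq0; apply/eqP/row_matrixP => i.
  by rewrite row0; apply: Dm_ker; rewrite -row_mul mulmx_ker row0.
by move/eqP.
Qed.

Lemma Xm_rank : (k <= \rank Xm + 1)%N.
Proof.
rewrite -{1}Dm_rank.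
have -> : Dm = const_mx 1 + (- Xm).
  apply/matrixP => i j; rewrite !mxE.
  by case: (_ == set0); rewrite ?subr0 ?subrr.
apply: leq_trans (mxrankS (addmx_sub_adds (submx_refl _) (submx_refl _))) _.
apply: leq_trans (mxrank_adds_leqif _ _).1 _.
rewrite mxrank_opp addnC leq_add2l.
have -> : const_mx 1 = (const_mx 1 : 'cV[rat]_k) *m (const_mx 1 : 'rV[rat]_k).
  by apply/matrixP => i j; rewrite !mxE big_ord1 !mxE mulr1.
by apply: leq_trans (mxrankM_maxl _ _) _; apply: rank_leq_col.
Qed.
End Lower.

Section LB.
Variable n : nat.
Local Notation Sig := (bool * {set 'I_n.+1})%type.
Local Notation k := #|{set 'I_n.+1}|.

Definition lbN : nfa Sig n.+1 :=
  NFA (fun (a : Sig) p q => if a.1 then (p \in a.2) && (q == ord0) else q \in a.2)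
      setT [set ord0].

Lemma lbN_acc S T : nfa_accepts lbN [:: (false, S); (true, T)] = (S :&: T != set0).
Proof.
rewrite /nfa_accepts /nfa_reach /= /nfa_step /=.
have -> : [set q | [exists p in [set: 'I_n.+1], q \in S]] = S.
  apply/setP=> q; rewrite inE; apply/existsP/idP => [[p /andP[_ ->]]|h] //.
  by exists ord0; rewrite inE h.
apply/set0Pn/set0Pn => [[x]|[x]].
  rewrite !inE => /andP[/existsP[p /and3P[pS pT _]] _].
  by exists p; rewrite inE pS pT.
rewrite inE => /andP[xS xT]; exists ord0; rewrite !inE eqxx andbT.
by apply/existsP; exists x; rewrite xS xT.
Qed.

Lemma lbN_bound m (A : wfa Sig m) :
  is_IFA A -> (forall w, ifa_accepts A w = nfa_accepts lbN w) ->
  (2 ^ n.+1 - 1 <= m)%N.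
Proof.
move=> HI HA.
have Hw : forall w, wfa_weight A w = (nfa_accepts lbN w)%:R.
  by move=> w; rewrite -HA /ifa_accepts; case: (HI w) => ->.
pose P : 'M[rat]_(k, m) :=
  \matrix_(i, l) (walpha A *m wM A (false, enum_val i)) 0 l.
pose Q : 'M[rat]_(m, k) :=
  \matrix_(l, j) (wM A (true, enum_val j) *m weta A) l 0.
have HX : Xm n.+1 = P *m Q.
  apply/matrixP => i j; rewrite !mxE -lbN_acc -Hw /wfa_weight.
  rewrite /wmat /= mulmx1 !mulmxA -mulmxA mxE.
  by apply: eq_bigr => l _; rewrite !mxE.
have := Xm_rank n.+1; rewrite HX => H.
rewrite -card_sets leq_subLR addnC.
apply: leq_trans H _; rewrite leq_add2r.
by apply: leq_trans (mxrankM_maxl _ _) _; apply: rank_leq_col.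
Qed.
End LB.

Close Scope ring_scope.

Theorem proposition4 :
  (forall (Sigma : finType) (n : nat) (N : nfa Sigma n),
     exists (m : nat) (A : wfa Sigma m),
       (m <= 2 ^ n)%N /\ is_IFA A /\
       (forall w, ifa_accepts A w = nfa_accepts N w))
  /\
  (forall n : nat, (3 <= n)%N ->
     exists (Sigma : finType) (N : nfa Sigma n),
       forall (m : nat) (A : wfa Sigma m),
         is_IFA A -> (forall w, ifa_accepts A w = nfa_accepts N w) ->
         (2 ^ n - 1 <= m)%N).
Proof.
split.
  move=> Sigma n N; exists #|{set 'I_n}|, (detA N).
  split; first by rewrite card_sets.
  split.
    by move=> w; rewrite det_weight; case: nfa_accepts; [right|left].
  by move=> w; rewrite /ifa_accepts det_weight; case: nfa_accepts.
case=> [//|n] _.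
exists (bool * {set 'I_n.+1})%type, (lbN n).
exact: lbN_bound.
Qed.
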